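(* Let $\mathcal X\subseteq\mathbb R^m$ be nonempty, convex and compact with diameter $D>0$, $F:\mathbb R^m\to\mathbb R^r$ affine, $C\in\mathbb R^{r\times n}$, $\Theta(x,y)=\frac12\|F(x)-Cy\|^2$, and let $L>0$ be such that for every $y\in\{0,1\}^n$, $\Theta(\cdot,y)$ is $L$-Lipschitz on $\mathcal X$ and $\|\nabla_x\Theta(x,y)\|\le L$ for $x\in\mathcal X$. Let $\operatorname{ALG}$ be a $\gamma$-approximation algorithm ($\gamma\in(0,1]$) for maximizing $\Theta(x,\cdot)$ over $\{0,1\}^n$, for every $x\in\mathcal X$. Given $\epsilon>0$, set $K=\lceil((D^2+L^2)/(2\epsilon))^2\rceil$, choose $x_0\in\mathcal X$, and for $k=0,\dots,K-1$ let $y_k=\operatorname{ALG}(\Theta(x_k,\cdot))$ and $x_{k+1}=\operatorname{Proj}_{\mathcal X}(x_k-K^{-1/2}\nabla_x\Theta(x_k,y_k))$. Let $\hat x=\frac1K\sum_{k=0}^{K-1}x_k$ and $\hat y=\operatorname{ALG}(\Theta(\hat x,\cdot))$. Then $(\hat x,\hat y)$ is a $(\gamma,\epsilon/\gamma)$-approximate minimax point of $\min_{x\in\mathcal X}\max_{y\in\{0,1\}^n}\Theta(x,y)$.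
   Context: $\operatorname{Proj}_{\mathcal X}$ is Euclidean projection onto $\mathcal X$. An algorithm is a $\gamma$-approximation algorithm for $\max_{y\in\mathcal Y}h(y)$ with nonnegative $h$ if on every instance it returns, in polynomial time, a feasible $\hat y\in\mathcal Y$ with $h(\hat y)\ge\gamma h(y^* )$ where $y^*$ is optimal. With $\mathcal Y=\{0,1\}^n$, a pair $(x^*,y^* )\in\mathcal X\times\mathcal Y$ is an $(\alpha,\epsilon)$-approximate minimax point ($\alpha\in(0,1]$, $\epsilon\ge0$) if $\alpha\max_{y\in\mathcal Y}\Theta(x^*,y)\le\Theta(x^*,y^* )\le\frac1\alpha\min_{x\in\mathcal X}\max_{y\in\mathcal Y}\Theta(x,y)+\epsilon$. *)

(* Defs.v *)
From HB Require Import structures.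
From mathcomp Require Import all_boot all_order all_algebra.
From mathcomp Require Import all_classical all_reals all_analysis.
Set Implicit Arguments. Unset Strict Implicit. Unset Printing Implicit Defensive.
Import Order.TTheory GRing.Theory Num.Theory numFieldNormedType.Exports.
Local Open Scope classical_set_scope.
Local Open Scope ring_scope.

Definition edot (R : realType) (m : nat) (u v : 'cV[R]_m) : R :=
  \sum_(i < m) u i 0 * v i 0.
Definition enorm (R : realType) (m : nat) (v : 'cV[R]_m) : R :=
  Num.sqrt (edot v v).

Definition convex_setR (R : realType) (m : nat) (X : set 'cV[R]_m) : Prop :=
  forall x y t, X x -> X y -> 0 <= t <= 1 -> X (t *: x + (1 - t) *: y).

Definition diam (R : realType) (m : nat) (X : set 'cV[R]_m) : R :=
  sup [set enorm (x - y) | x in X & y in X].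

(* Euclidean projection onto X: a point of X nearest to z (unique when X is
   nonempty, closed and convex). *)
Definition Proj (R : realType) (m : nat) (X : set 'cV[R]_m) (z : 'cV[R]_m)
  : 'cV[R]_m :=
  xget z [set p | X p /\ forall x, X x -> enorm (z - p) <= enorm (z - x)].

Definition is_gradient (R : realType) (m : nat) (f : 'cV[R]_m -> R)
  (x g : 'cV[R]_m) : Prop :=
  forall v : 'cV[R]_m,
    (fun h : R => h^-1 * (f (x + h *: v) - f x)) @ (0 : R)^' --> edot g v.

(* the gradient (0 if it does not exist) *)
Definition grad (R : realType) (m : nat) (f : 'cV[R]_m -> R) (x : 'cV[R]_m)
  : 'cV[R]_m :=
  xget 0 [set g | is_gradient f x g].

(* the binary points y in {0,1}^n, encoded as boolean finite functions *)
Definition bvec (R : realType) (n : nat) (y : {ffun 'I_n -> bool}) : 'cV[R]_n :=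
  \col_i ((y i)%:R).

(* Theta(x, y) = 1/2 || F(x) - C y ||^2 with F(x) = A x + b affine *)
Definition Theta (R : realType) (m r n : nat) (A : 'M[R]_(r, m)) (b : 'cV[R]_r)
  (C : 'M[R]_(r, n)) (x : 'cV[R]_m) (y : {ffun 'I_n -> bool}) : R :=
  2^-1 * enorm (A *m x + b - C *m bvec R y) ^+ 2.

(* max over y in {0,1}^n of a nonnegative function (finite nonempty max) *)
Definition maxY (R : realType) (n : nat) (h : {ffun 'I_n -> bool} -> R) : R :=
  \big[Num.max/0]_(y : {ffun 'I_n -> bool}) h y.

(* (alpha, eps)-approximate minimax point of min_{x in X} max_y Th(x, y);
   the min over the compact X is written as an inf (it is attained). *)
Definition approx_minimax (R : realType) (m n : nat) (X : set 'cV[R]_m)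
  (Th : 'cV[R]_m -> {ffun 'I_n -> bool} -> R) (alpha eps : R)
  (xs : 'cV[R]_m) (ys : {ffun 'I_n -> bool}) : Prop :=
  X xs /\
  alpha * maxY (Th xs) <= Th xs ys <=
    alpha^-1 * inf [set maxY (Th x) | x in X] + eps.

(* gamma-approximation algorithm (output quality part) for max_y Theta(x,.),
   for every x in X; the algorithm is a map from instances (indexed by x) to
   outputs. *)
Definition approx_alg (R : realType) (m n : nat) (X : set 'cV[R]_m)
  (Th : 'cV[R]_m -> {ffun 'I_n -> bool} -> R) (gamma : R)
  (ALG : 'cV[R]_m -> {ffun 'I_n -> bool}) : Prop :=
  forall x, X x -> gamma * maxY (Th x) <= Th x (ALG x).

Fixpoint iterates (R : realType) (m n : nat) (X : set 'cV[R]_m)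
  (Th : 'cV[R]_m -> {ffun 'I_n -> bool} -> R)
  (ALG : 'cV[R]_m -> {ffun 'I_n -> bool}) (eta : R) (x0 : 'cV[R]_m) (k : nat)
  : 'cV[R]_m :=
  match k with
  | 0 => x0
  | k'.+1 =>
      let xk := iterates X Th ALG eta x0 k' in
      Proj X (xk - eta *: grad (fun x => Th x (ALG xk)) xk)
  end.

(* Main.v *)
Set Warnings "-all".
Require Import Defs.
From HB Require Import structures.
From mathcomp Require Import all_boot all_order all_algebra.
From mathcomp Require Import all_classical all_reals all_analysis.
From mathcomp Require Import ring lra.
Import Order.TTheory GRing.Theory Num.Theory numFieldNormedType.Exports.
Local Open Scope classical_set_scope.
Local Open Scope ring_scope.

Section Dot.
Context {R : realType} {m : nat}.
Implicit Types u v w : 'cV[R]_m.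

Lemma edotC u v : edot u v = edot v u.
Proof. by apply: eq_bigr => i _; rewrite mulrC. Qed.
Lemma edotDl u v w : edot (u + v) w = edot u w + edot v w.
Proof. by rewrite /edot -big_split; apply: eq_bigr => i _; rewrite !mxE mulrDl. Qed.
Lemma edotNl u w : edot (- u) w = - edot u w.
Proof. by rewrite /edot -sumrN; apply: eq_bigr => i _; rewrite !mxE mulNr. Qed.
Lemma edotBl u v w : edot (u - v) w = edot u w - edot v w.
Proof. by rewrite edotDl edotNl. Qed.
Lemma edotZl a u w : edot (a *: u) w = a * edot u w.
Proof. by rewrite /edot mulr_sumr; apply: eq_bigr => i _; rewrite !mxE mulrA. Qed.
Lemma edotDr u v w : edot w (u + v) = edot w u + edot w v.
Proof. by rewrite edotC edotDl !(edotC w). Qed.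
Lemma edotBr u v w : edot w (u - v) = edot w u - edot w v.
Proof. by rewrite edotC edotBl !(edotC w). Qed.
Lemma edotZr a u w : edot w (a *: u) = a * edot w u.
Proof. by rewrite edotC edotZl edotC. Qed.
Lemma edot_ge0 u : 0 <= edot u u.
Proof. by apply: sumr_ge0 => i _; rewrite -expr2 sqr_ge0. Qed.
Lemma enorm_sq u : enorm u ^+ 2 = edot u u.
Proof. by rewrite /enorm sqr_sqrtr // edot_ge0. Qed.
Lemma enorm_ge0 u : 0 <= enorm u.
Proof. exact: sqrtr_ge0. Qed.
Lemma edot_suml (I : finType) (f : I -> 'cV[R]_m) w :
  edot (\sum_k f k) w = \sum_k edot (f k) w.
Proof.
rewrite /edot exchange_big /=; apply: eq_bigr => i _.
by rewrite summxE mulr_suml.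
Qed.
End Dot.

Lemma edot_mulmx (R : realType) (r m : nat) (A : 'M[R]_(r, m)) w v :
  edot (A^T *m w) v = edot w (A *m v).
Proof.
rewrite /edot.
under eq_bigr do rewrite mxE mulr_suml.
under [RHS]eq_bigr do rewrite mxE mulr_sumr.
rewrite exchange_big /=; apply: eq_bigr => j _; apply: eq_bigr => i _.
rewrite mxE; ring.
Qed.

Section Grad.
Variables (R : realType) (m r n : nat) (A : 'M[R]_(r, m)) (b : 'cV[R]_r)
  (C : 'M[R]_(r, n)).

Definition wv x (y : {ffun 'I_n -> bool}) := A *m x + b - C *m bvec R y.
Definition g0 x y := A^T *m wv x y.

Lemma ThetaE x y : Theta A b C x y = 2^-1 * edot (wv x y) (wv x y).
Proof. by rewrite /Theta enorm_sq. Qed.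

Lemma Theta_expand x x' y :
  Theta A b C x' y = Theta A b C x y + edot (g0 x y) (x' - x)
     + 2^-1 * edot (A *m (x' - x)) (A *m (x' - x)).
Proof.
rewrite !ThetaE.
have -> : wv x' y = wv x y + A *m (x' - x).
  rewrite /wv mulmxBr. set p := A *m x'. set q := A *m x. set s := C *m _.
  by rewrite [RHS]addrC !addrA subrK.
rewrite /g0 edot_mulmx.
move: (wv x y) (A *m (x' - x)) => w d.
rewrite !edotDl !edotDr (edotC d w).
by field.
Qed.

Lemma is_gradient_g0 x y : is_gradient (fun z => Theta A b C z y) x (g0 x y).
Proof.
move=> v.
set c := 2^-1 * edot (A *m v) (A *m v).
have E : {near (0:R)^', (fun h : R => edot (g0 x y) v + h * c) =1
     (fun h : R => h^-1 * (Theta A b C (x + h *: v) y - Theta A b C x y))}.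
  near=> h.
  have hn0 : h != 0 by near: h; exact: nbhs_dnbhs_neq.
  rewrite (Theta_expand x) [x + _]addrC addrK edotZr -scalemxAr edotZl edotZr /c.
  by field.
apply: cvg_trans (near_eq_cvg E) _.
set a := edot (g0 x y) v.
have cg : {for 0, continuous (fun h : R => a + h * c)}.
  apply: continuousD; first exact: cvg_cst.
  by apply: continuousM => //; exact: cvg_cst.
move: cg; set g := (fun h : R => a + h * c) => cg.
have -> : a = g 0 by rewrite /g mul0r addr0.
apply: cvg_trans cg; apply: cvg_app; exact: cvg_within.
Unshelve. all: by end_near.
Qed.

Lemma grad_eq x y v :
  edot (grad (fun z => Theta A b C z y) x) v = edot (g0 x y) v.
Proof.
have G := is_gradient_g0 x y.
have : is_gradient (fun z => Theta A b C z y) x (grad (fun z => Theta A b C z y) x).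
  by apply: xgetPex; exists (g0 x y).
move=> /(_ v) /cvg_lim <- //; exact: cvg_lim (G v).
Qed.
End Grad.

Lemma continuous_sum_fun (R : realType) (T : topologicalType) (I : finType)
  (F : I -> T -> R) : (forall i, continuous (F i)) ->
  continuous (fun q => \sum_i F i q).
Proof.
move=> cF p.
rewrite unlock /=.
elim: (index_enum I) => [|i s IH] /=.
  exact: cvg_cst.
by apply: continuousD => //; apply: cF.
Qed.

Lemma continuous_sqdist (R : realType) m (z : 'cV[R]_m) :
  continuous (fun p : 'cV[R]_m => edot (z - p) (z - p)).
Proof.
rewrite /edot; apply: continuous_sum_fun => i.
have ce : continuous (fun q : 'cV[R]_m => (z - q) i 0).
  have -> : (fun q : 'cV[R]_m => (z - q) i 0) = (fun q => z i 0 - q i 0).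
    by apply: funext => q; rewrite !mxE.
  move=> q. have h1 := @coord_continuous R m 1 i 0 q. have h2 : {for q, continuous (fun _ : 'cV[R]_m => z i 0)} by apply: cst_continuous. exact: (continuousB h2 h1).
by move=> q; exact: (continuousM (ce q) (ce q)).
Qed.

Lemma enorm_le (R : realType) m (u v : 'cV[R]_m) :
  (enorm u <= enorm v) = (edot u u <= edot v v).
Proof. by rewrite /enorm ler_sqrt // edot_ge0. Qed.

Lemma edot_sqB {R : realType} {m} (u v : 'cV[R]_m) :
  edot (u - v) (u - v) = edot u u - 2 * edot u v + edot v v.
Proof. rewrite !edotBl !edotBr (edotC v u); ring. Qed.

Lemma Proj_spec (R : realType) m (X : set 'cV[R]_m) (z : 'cV[R]_m) :
  X !=set0 -> compact X -> convex_setR X ->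
  X (Proj X z) /\ forall x, X x ->
    edot (Proj X z - x) (Proj X z - x) <= edot (z - x) (z - x).
Proof.
move=> X0 cX cvX.
have cf : {within X, continuous (fun p => edot (z - p) (z - p))}.
  apply: continuous_subspaceT; exact: continuous_sqdist.
have [p pX pmin] := compact_EVT_min X0 cX cf.
have [PX Pmin] : X (Proj X z) /\
    forall x, X x -> enorm (z - Proj X z) <= enorm (z - x).
  rewrite /Proj; set S := [set p | _].
  suff : S (xget z S) by [].
  apply: xgetPex; exists p; split; first by rewrite -inE.
  by move=> x Xx; rewrite enorm_le; apply: pmin; rewrite inE.
split => // x Xx.
set P := Proj X z in PX Pmin *.
set u := z - P; set d := x - P.
have key : edot u d <= 0.
  rewrite leNgt; apply/negP => apos.
  set a := edot u d in apos *; set N := edot d d.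
  have N0 : 0 <= N by exact: edot_ge0.
  set t := a / (a + N).
  have t0 : 0 < t by rewrite divr_gt0 // ltr_wpDr.
  have t1 : t <= 1 by rewrite ler_pdivrMr ?mul1r ?lerDl // ltr_wpDr.
  have Xq : X (t *: x + (1 - t) *: P) by apply: cvX => //; rewrite (ltW t0) t1.
  have := Pmin _ Xq; rewrite enorm_le.
  have -> : z - (t *: x + (1 - t) *: P) = u - t *: d.
    rewrite /u /d scalerBl scale1r scalerBr; set tx := t *: x; set tP := t *: P.
    by rewrite opprD !opprB !addrA [LHS]addrAC [z - tx - P]addrAC [RHS]addrAC.
  change (edot (z - P) (z - P)) with (edot u u).
  rewrite (edot_sqB u (t *: d)) !edotZr !edotZl -/a -/N.
  have tN : t * N <= a.
    rewrite /t mulrAC ler_pdivrMr ?ltr_wpDr //.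
    rewrite ler_wpM2l ?(ltW apos) //. lra.
  move=> H.
  have H2 : 2 * a <= t * N.
    have : t * (2 * a) <= t * (t * N) by lra.
    by rewrite ler_pM2l.
  lra.
have -> : z - x = u - d by rewrite /u /d opprB addrA subrK.
have -> : P - x = - d by rewrite /d opprB.
rewrite edot_sqB edotNl edotC edotNl opprK.
have := edot_ge0 u. have := key. lra.
Qed.

Lemma telesc (R : realType) (d s : nat -> R) (c : R) :
  (forall k, d k.+1 <= d k - s k + c) ->
  forall N, \sum_(k < N) s k <= d 0%N - d N + N%:R * c.
Proof.
move=> H; elim=> [|N IH]; first by rewrite big_ord0 subrr mul0r addr0.
rewrite big_ord_recr /= -natr1 mulrDl mul1r.
have := H N; lra.
Qed.

Lemma avg_in (R : realType) m (X : set 'cV[R]_m) (x : nat -> 'cV[R]_m) :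
  convex_setR X -> (forall k, X (x k)) ->
  forall N, (0 < N)%N -> X (N%:R^-1 *: \sum_(k < N) x k).
Proof.
move=> cX Xx; elim=> [//|N IH] _.
rewrite big_ord_recr /=.
have [->|N0] := eqVneq N 0%N.
  by rewrite big_ord0 add0r invr1 scale1r.
have Np : (0 < N)%N by rewrite lt0n.
have NR : (N%:R : R) != 0 by rewrite pnatr_eq0.
have N1R : (N.+1%:R : R) != 0 by rewrite pnatr_eq0.
set t : R := N%:R / N.+1%:R.
have -> : N.+1%:R^-1 *: (\sum_(k < N) x k + x N) =
   t *: (N%:R^-1 *: \sum_(k < N) x k) + (1 - t) *: x N.
  rewrite scalerDr scalerA; congr (_ *: _ + _ *: _).
    by rewrite /t mulrAC divff // mul1r.
  by rewrite /t -natr1; field; rewrite natr1.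
apply: cX => //; first exact: IH.
rewrite /t divr_ge0 ?ler0n //= ler_pdivrMr ?ltr0n // mul1r ler_nat //.
Qed.

Lemma maxY_ge {R : realType} {n} (h : {ffun 'I_n -> bool} -> R) y : h y <= maxY h.
Proof. exact: le_bigmax. Qed.

Lemma maxY_le {R : realType} {n} (h : {ffun 'I_n -> bool} -> R) c :
  0 <= c -> (forall y, h y <= c) -> maxY h <= c.
Proof. by move=> c0 H; apply: bigmax_le. Qed.

Lemma Theta_ge0 (R : realType) m r n (A : 'M[R]_(r, m)) b (C : 'M[R]_(r, n)) x y :
  0 <= Theta A b C x y.
Proof. by rewrite /Theta mulr_ge0 ?invr_ge0 ?ler0n // exprn_ge0 // enorm_ge0. Qed.

Theorem mainTheorem6 (R : realType) (m r n : nat) (X : set 'cV[R]_m)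
  (D L gamma eps : R) (A : 'M[R]_(r, m)) (b : 'cV[R]_r) (C : 'M[R]_(r, n))
  (ALG : 'cV[R]_m -> {ffun 'I_n -> bool}) (x0 : 'cV[R]_m) :
  X !=set0 -> convex_setR X -> compact X ->
  D = diam X -> 0 < D ->
  0 < L ->
  (forall y, forall x1 x2, X x1 -> X x2 ->
     `|Theta A b C x1 y - Theta A b C x2 y| <= L * enorm (x1 - x2)) ->
  (forall y x, X x -> enorm (grad (fun z => Theta A b C z y) x) <= L) ->
  0 < gamma <= 1 ->
  approx_alg X (Theta A b C) gamma ALG ->
  0 < eps ->
  X x0 ->
  let K := `|Num.ceil (((D ^+ 2 + L ^+ 2) / (2 * eps)) ^+ 2)|%N in
  let xk := iterates X (Theta A b C) ALG (Num.sqrt K%:R)^-1 x0 in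
  let xhat := K%:R^-1 *: \sum_(k < K) xk k in
  let yhat := ALG xhat in
  approx_minimax X (Theta A b C) gamma (eps / gamma) xhat yhat.
Proof.
move=> X0 cvX cX HD D0 L0 _ Hg /andP[g0p g1] Halg e0 Xx0 K xk xhat yhat.
set Th := Theta A b C.
set f := fun x => maxY (Th x).
set c := (D ^+ 2 + L ^+ 2) / (2 * eps).
have c0 : 0 < c by rewrite divr_gt0 ?mulr_gt0 // ltr_wpDr ?sqr_ge0 // exprn_gt0.
have Kc : c ^+ 2 <= K%:R.
  rewrite /K natr_absz ger0_norm -/c; first exact: ceil_ge.
  by rewrite ceil_ge0 (lt_le_trans _ (sqr_ge0 c)) // ltrN10.
have KR : 0 < (K%:R : R) by apply: lt_le_trans Kc; rewrite exprn_gt0.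
have Kp : (0 < K)%N by rewrite -(ltr0n R).
pose eta : R := (Num.sqrt (K%:R : R))^-1.
have sqK0 : 0 < Num.sqrt (K%:R : R) by rewrite sqrtr_gt0.
have eta0 : 0 < eta by rewrite invr_gt0.
have Keta : K%:R * eta ^+ 2 = 1.
  by rewrite /eta exprVn sqr_sqrtr ?(ltW KR) // divff // gt_eqF.
have csK : c <= Num.sqrt K%:R.
  by rewrite -(ger0_norm (ltW c0)) -sqrtr_sqr ler_sqrt.
have Xk : forall k, X (xk k).
  elim=> [//|k IH]; rewrite /xk /=.
  exact: (@Proj_spec R m X _ X0 cX cvX).1.
have Xhat : X xhat by apply: avg_in.
have Hdesc : forall xs, X xs -> forall k,
  edot (xk k.+1 - xs) (xk k.+1 - xs) <= edot (xk k - xs) (xk k - xs)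
     - 2 * eta * (gamma * f (xk k) - f xs) + eta ^+ 2 * L ^+ 2.
  move=> xs Xs k.
  set y := ALG (xk k).
  set G := grad (fun x => Th x y) (xk k).
  have E : xk k.+1 = Proj X (xk k - eta *: G) by [].
  rewrite E.
  have [_ Pm] := @Proj_spec R m X (xk k - eta *: G) X0 cX cvX.
  apply: le_trans (Pm _ Xs) _.
  have -> : xk k - eta *: G - xs = (xk k - xs) - eta *: G by rewrite addrAC.
  rewrite (edot_sqB (xk k - xs) (eta *: G)) !edotZr !edotZl.
  have hG : enorm G <= L := Hg y (xk k) (Xk k).
  have GG : edot G G <= L ^+ 2.
    rewrite -enorm_sq; have := enorm_ge0 G; nra.
  have lin : gamma * f (xk k) - f xs <= edot (xk k - xs) G.
    rewrite edotC /G grad_eq.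
    have ex := @Theta_expand R m r n A b C (xk k) xs y.
    have q0 : 0 <= 2^-1 * edot (A *m (xs - xk k)) (A *m (xs - xk k)).
      by rewrite mulr_ge0 ?invr_ge0 ?ler0n ?edot_ge0.
    rewrite !edotBr in ex *.
    have h1 : gamma * f (xk k) <= Th (xk k) y := Halg _ (Xk k).
    have h2 : Th xs y <= f xs := maxY_ge (Th xs) y.
    rewrite /Th in h1 h2 *. lra.
  have e1 : eta * (gamma * f (xk k) - f xs) <= eta * edot (xk k - xs) G.
    by rewrite ler_wpM2l // ltW.
  have e2 : eta * (eta * edot G G) <= eta ^+ 2 * L ^+ 2.
    by rewrite mulrA -expr2 ler_wpM2l // exprn_ge0 // ltW.
  lra.
set sqK := Num.sqrt (K%:R : R).
have es : eta * sqK = 1 by rewrite /eta mulVf // gt_eqF.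
have KsK : (K%:R : R) = sqK * sqK by rewrite -expr2 sqr_sqrtr // ltW.
have hub : has_ubound [set enorm (x - y) | x in X & y in X].
  apply: contrapT => nub.
  have : diam X = 0 by apply: sup_out => -[].
  by rewrite -HD => D00; move: D0; rewrite D00 ltxx.
have Hsum : forall xs, X xs -> \sum_(k < K) (gamma * f (xk k) - f xs) * (2 * eta)
   <= D ^+ 2 + L ^+ 2.
  move=> xs Xs.
  have T := @telesc R (fun k => edot (xk k - xs) (xk k - xs))
    (fun k => 2 * eta * (gamma * f (xk k) - f xs)) _ (Hdesc xs Xs) K.
  have d0 : edot (x0 - xs) (x0 - xs) <= D ^+ 2.
    have h : enorm (x0 - xs) <= D.
      rewrite HD; apply: (ub_le_sup hub); exists x0 => //; exists xs => //.
    rewrite -enorm_sq; have := enorm_ge0 (x0 - xs); nra.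
  have dK := edot_ge0 (xk K - xs).
  have E1 : \sum_(k < K) (gamma * f (xk k) - f xs) * (2 * eta) =
     \sum_(k < K) 2 * eta * (gamma * f (xk k) - f xs).
    by apply: eq_bigr => k _; rewrite mulrC.
  rewrite E1.
  have E2 : K%:R * (eta ^+ 2 * L ^+ 2) = L ^+ 2 by rewrite mulrA Keta mul1r.
  move: T; rewrite E2 /=. 
  have -> : xk 0%N = x0 by [].
  lra.
have Jen : forall y, Th xhat y <= K%:R^-1 * \sum_(k < K) Th (xk k) y.
  move=> y.
  set g := @g0 R m r n A b C xhat y.
  have s0 : \sum_(k < K) edot g (xk k - xhat) = 0.
    under eq_bigr do rewrite edotBr.
    rewrite sumrB sumr_const card_ord -mulr_natl.
    have -> : \sum_(k < K) edot g (xk k) = edot g (\sum_(k < K) xk k).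
      by rewrite edotC edot_suml; apply: eq_bigr => k _; rewrite edotC.
    by rewrite /xhat edotZr mulrA divff ?mul1r ?subrr // gt_eqF.
  have le1 : \sum_(k < K) (Th xhat y + edot g (xk k - xhat)) <=
             \sum_(k < K) Th (xk k) y.
    apply: ler_sum => k _.
    rewrite /Th (@Theta_expand R m r n A b C xhat (xk k) y) -/g.
    by rewrite lerDl mulr_ge0 ?invr_ge0 ?ler0n ?edot_ge0.
  move: le1; rewrite big_split /= s0 addr0 sumr_const card_ord => le1.
  rewrite -mulr_natl in le1.
  apply: le_trans (_ : K%:R^-1 * (K%:R * Th xhat y) <= _).
    by rewrite mulrA mulVf ?mul1r // gt_eqF.
  by rewrite ler_wpM2l // invr_ge0 ler0n.
have fhat : f xhat <= K%:R^-1 * \sum_(k < K) f (xk k).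
  apply: maxY_le.
    by rewrite mulr_ge0 ?invr_ge0 ?ler0n // sumr_ge0 // => k _;
       apply: le_trans (maxY_ge _ (ALG x0)); apply: Theta_ge0.
  move=> y; apply: le_trans (Jen y) _; rewrite ler_wpM2l ?invr_ge0 ?ler0n //.
  by apply: ler_sum => k _; apply: maxY_ge.
have key : forall xs, X xs -> gamma * f xhat - eps <= f xs.
  move=> xs Xs.
  have H := Hsum xs Xs.
  set Sf := \sum_(k < K) f (xk k).
  have E : \sum_(k < K) (gamma * f (xk k) - f xs) * (2 * eta) =
      (gamma * Sf - K%:R * f xs) * (2 * eta).
    by rewrite -mulr_suml sumrB -mulr_sumr sumr_const card_ord [K%:R * _]mulr_natl.
  rewrite E in H.
  set Q := K%:R^-1 * Sf in fhat.
  have SfQ : Sf = K%:R * Q by rewrite /Q mulrA divff ?mul1r // gt_eqF.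
  rewrite SfQ KsK in H.
  have H2 : sqK * ((gamma * Q - f xs) * 2) <= D ^+ 2 + L ^+ 2.
    move: H; congr (_ <= _).
    have -> : (gamma * (sqK * sqK * Q) - sqK * sqK * f xs) * (2 * eta) =
       sqK * ((gamma * Q - f xs) * 2) * (eta * sqK) by ring.
    by rewrite es mulr1.
  have HP : D ^+ 2 + L ^+ 2 <= sqK * (2 * eps).
    by move: csK; rewrite /c ler_pdivrMr // mulr_gt0.
  have H3 : (gamma * Q - f xs) * 2 <= 2 * eps.
    by rewrite -(ler_pM2l sqK0); apply: le_trans H2 HP.
  have H4 : gamma * f xhat <= gamma * Q by rewrite ler_wpM2l // ltW.
  lra.
split => //; apply/andP; split.
  exact: Halg.
set S := [set maxY (Th x) | x in X].
have hinf : gamma * f xhat - eps <= inf S.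
  apply: lb_le_inf; first by exists (f x0), x0.
  by move=> _ [xs Xs <-]; exact: key.
have h1 : Th xhat yhat <= f xhat by apply: maxY_ge.
have h2 : gamma^-1 * (gamma * f xhat - eps) <= gamma^-1 * inf S.
  by rewrite ler_wpM2l // invr_ge0 ltW.
have h3 : gamma^-1 * (gamma * f xhat - eps) + eps / gamma = f xhat.
  by field; rewrite gt_eqF.
lra.
Qed.
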